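(* Let $n\ge 3$, $k\ge 1$, and let $T_1,\dots,T_k$ be independent uniformly random spanning trees of the complete graph $K_n$. For an edge $e$ of $K_n$ let $X_e^{T_i}$ be the indicator of $e\in E(T_i)$ and \[R_e=\sum_{i=1}^k X_e^{T_i}-\max\left(X_e^{T_1},\dots,X_e^{T_k}\right).\] Let $e\ne e'$ be edges of $K_n$. Then \begin{itemize} \item if $e$ and $e'$ share no endpoint, $\mathrm{Cov}(R_e,R_{e'})=0$; \item if $e$ and $e'$ share an endpoint, \[\mathrm{Cov}(R_e,R_{e'})=-\frac{k}{n^2}+\frac{2k}{n^2}\left(1-\frac{2}{n}\right)^{k-1}+\left(1-\frac{4}{n}+\frac{3}{n^2}\right)^k-\left(1-\frac{2}{n}\right)^{2k}.\] \end{itemize}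
   Context: Uniform random spanning tree: chosen from the uniform distribution on the $n^{n-2}$ labeled spanning trees of $K_n$ on vertex set $[n]$. $R_e$ is the number of repeated (surplus) occurrences of $e$ among the trees. *)

(* Defs.v *)
From mathcomp Require Import all_boot all_order all_algebra.
Set Implicit Arguments. Unset Strict Implicit. Unset Printing Implicit Defensive.
Import Order.TTheory GRing.Theory Num.Theory.

(* Vertices of K_n are 'I_n; an edge of K_n is a 2-element subset of 'I_n;
   a (spanning) subgraph is a set of edges. *)

Definition adj (n : nat) (F : {set {set 'I_n}}) : rel 'I_n :=
  fun x y => [set x; y] \in F.

(* F is a spanning tree of K_n: all its elements are edges of K_n, the graph
   ([n], F) is connected, and it is acyclic (no edge {x,y} of F lies on a cycle,
   i.e. x and y are not connected once that edge is removed). *)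
Definition is_spanning_tree (n : nat) (F : {set {set 'I_n}}) : bool :=
  [&& [forall f in F, #|f| == 2%N],
      [forall x, forall y, connect (adj F) x y] &
      [forall f in F, forall x, forall y,
         ((f == [set x; y]) && (x != y)) ==> ~~ connect (adj (F :\ f)) x y]].

(* The sample space: k-tuples (T_1,...,T_k) of spanning trees of K_n, with the
   uniform distribution (= independent uniform spanning trees). *)
Definition tree_tuples (n k : nat) : {set {ffun 'I_k -> {set {set 'I_n}}}} :=
  [set T : {ffun 'I_k -> {set {set 'I_n}}} | [forall i, is_spanning_tree (T i)]].

Definition Xind (n k : nat) (e : {set 'I_n}) (T : {ffun 'I_k -> {set {set 'I_n}}})
  (i : 'I_k) : nat := (e \in T i).

Definition Rsurplus (n k : nat) (e : {set 'I_n})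
  (T : {ffun 'I_k -> {set {set 'I_n}}}) : nat :=
  (\sum_(i < k) Xind e T i - \max_(i < k) Xind e T i)%N.

Local Open Scope ring_scope.

Definition Expect (R : realFieldType) (n k : nat)
  (f : {ffun 'I_k -> {set {set 'I_n}}} -> R) : R :=
  (\sum_(T in tree_tuples n k) f T) / (#|tree_tuples n k|)%:R.

Definition Cov (R : realFieldType) (n k : nat)
  (f g : {ffun 'I_k -> {set {set 'I_n}}} -> R) : R :=
  Expect (fun T => f T * g T) - Expect f * Expect g.

Definition Rr (R : realFieldType) (n k : nat) (e : {set 'I_n})
  (T : {ffun 'I_k -> {set {set 'I_n}}}) : R := (Rsurplus e T)%:R.

(* Main.v *)
Require Import Defs.
From mathcomp Require Import all_boot all_order all_algebra.
From mathcomp Require Import zify ring.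
Import Order.TTheory GRing.Theory Num.Theory.
Set Implicit Arguments. Unset Strict Implicit. Unset Printing Implicit Defensive.

Lemma connect_ind (T : finType) (e : rel T) (Q : T -> Prop) x y :
  Q x -> (forall v w, Q v -> e v w -> Q w) -> connect e x y -> Q y.
Proof.
move=> Qx step /connectP[p]; elim: p x Qx => [|z p IH] x Qx /=; first by move=> _ ->.
by case/andP=> exz pp ly; apply: (IH z (step _ _ Qx exz) pp ly).
Qed.

Ltac eqcase :=
  repeat match goal with H : is_true _ |- _ => revert H end;
  repeat match goal with |- context[?a == ?b] => case: (a =P b) => ? end;
  simpl; intros; try discriminate; try done; congruence.

Lemma nand_eq (A B : eqType) (a b : A) (c d : B) :
  ~~ ((a == b) && (c == d)) -> a = b -> c = d -> False.
Proof. by move=> H e1 e2; move: H; rewrite e1 e2 !eqxx. Qed.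

Ltac pre := repeat match goal with
 | H : is_true (~~ (_ || _)) |- _ => rewrite negb_or in H
 | H : is_true (~~ ((?a == ?b) && (?c == ?d))) |- _ =>
     move/nand_eq: H => H
 | H : is_true (~~ (?a == ?b)) |- _ => move/eqP: H => H
 | H : is_true (_ || _) |- _ => case/orP: H => H
 | H : is_true (_ && _) |- _ => case/andP: H => ? ?
 | H : is_true (?a == ?b) |- _ => move/eqP: H => H
 end.

Ltac bsolve := intros; try (apply/negP; intro); pre;
  first [congruence | match goal with H : _ -> _ -> False |- _ => exfalso; apply H; congruence end].

Section Graph.
Variable n : nat.
Notation Gr := {set {set 'I_n}}.
Implicit Types (T G F : Gr) (x y p q u v w s r a b c d z : 'I_n).
Definition cn (F : Gr) := connect (adj F).

Lemma adj_sym (F : Gr) : symmetric (adj F).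
Proof. by move=> x y; rewrite /adj setUC. Qed.

Lemma adj_csym (F : Gr) : connect_sym (adj F).
Proof. exact/sym_connect_sym/adj_sym. Qed.

Lemma cn_sym F x y : cn F x y = cn F y x.
Proof. exact: adj_csym. Qed.

Lemma cn_trans F x y z : cn F x y -> cn F y z -> cn F x z.
Proof. exact: connect_trans. Qed.

Lemma cn_refl F x : cn F x x.
Proof. exact: connect0. Qed.

Lemma cn_edge (F : Gr) x y : [set x; y] \in F -> cn F x y.
Proof. by move=> h; apply: connect1. Qed.

Lemma cn_mono (F F' : Gr) x y : F \subset F' -> cn F x y -> cn F' x y.
Proof.
move=> sub; apply: connect_sub => u v h; apply: connect1.
by rewrite /adj (subsetP sub).
Qed.

Lemma cn_root F x y : cn F x y <-> fingraph.root (adj F) x = fingraph.root (adj F) y.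
Proof. split; [move/(fingraph.rootP (adj_csym F)) => // | move=> h; exact/(fingraph.rootP (adj_csym F))]. Qed.

Lemma set2_eq (x y v w : 'I_n) : [set v; w] = [set x; y] ->
  (v = x /\ w = y) \/ (v = y /\ w = x).
Proof.
move=> E.
have hv : v \in [set x; y] by rewrite -E set21.
have hw : w \in [set x; y] by rewrite -E set22.
have hx : x \in [set v; w] by rewrite E set21.
have hy : y \in [set v; w] by rewrite E set22.
case/set2P: hv => ?; case/set2P: hw => ?; case/set2P: hx => ?; case/set2P: hy => ?; subst; auto.
Qed.

Lemma set2_inj (b u c : 'I_n) : b != c -> [set b; c] = [set b; u] -> c = u.
Proof.
move=> bc E; have : c \in [set b; u] by rewrite -E set22.
by case/set2P => // cb; rewrite cb eqxx in bc.
Qed.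

Definition rt (F : Gr) := fingraph.root (adj F).
Lemma cnE F x y : cn F x y = (rt F x == rt F y).
Proof. by rewrite /rt (root_connect (adj_csym F)). Qed.

Lemma cadd (G : Gr) x y p q :
  cn ([set x; y] |: G) p q =
  [|| cn G p q, cn G p x && cn G y q | cn G p y && cn G x q].
Proof.
apply/idP/idP.
- apply: (connect_ind (Q := fun v => [|| cn G p v, cn G p x && cn G y v | cn G p y && cn G x v])).
    by rewrite cn_refl.
  move=> v w Qv; rewrite /adj in_setU1 => /orP[/eqP/set2_eq [[? ?]|[? ?]] | vw]; subst.
  + by move: Qv; rewrite !cnE; eqcase.
  + by move: Qv; rewrite !cnE; eqcase.
  + have : cn G v w by apply: connect1.
    by move: Qv; rewrite !cnE; eqcase.
- have sub : G \subset [set x; y] |: G by apply/subsetP => z zi; rewrite in_setU1 zi orbT.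
  have exy : cn ([set x; y] |: G) x y by apply: cn_edge; rewrite setU11.
  have eyx : cn ([set x; y] |: G) y x by rewrite cn_sym.
  case/or3P => [h|/andP[h1 h2]|/andP[h1 h2]].
  + exact: cn_mono h.
  + exact: cn_trans (cn_mono sub h1) (cn_trans exy (cn_mono sub h2)).
  + exact: cn_trans (cn_mono sub h1) (cn_trans eyx (cn_mono sub h2)).
Qed.


Definition tree (T : Gr) := is_spanning_tree T.

Lemma tree_edge T f : tree T -> f \in T -> #|f| = 2.
Proof. by case/and3P => /forall_inP h _ _ fT; apply/eqP/h. Qed.

Lemma tree_conn T x y : tree T -> cn T x y.
Proof. by case/and3P => _ /forallP h _; exact: (forallP (h x) y). Qed.

Lemma tree_bridge T x y : tree T -> [set x; y] \in T -> x != y ->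
  ~~ cn (T :\ [set x; y]) x y.
Proof.
case/and3P => _ _ /forall_inP h xyT nxy.
by move: (h _ xyT) => /forallP/(_ x)/forallP/(_ y); rewrite eqxx nxy.
Qed.

Lemma mk_tree T : (forall f, f \in T -> #|f| = 2) -> (forall x y, cn T x y) ->
  (forall x y, [set x; y] \in T -> x != y -> ~~ cn (T :\ [set x; y]) x y) ->
  tree T.
Proof.
move=> H1 H2 H3; apply/and3P; split.
- by apply/forall_inP => f /H1 ->.
- by apply/forallP => x; apply/forallP => y; apply: H2.
- apply/forall_inP => f fT; apply/forallP => x; apply/forallP => y.
  apply/implyP => /andP[/eqP E nxy]; subst f; exact: H3.
Qed.

Lemma edge_neq T x y : tree T -> [set x; y] \in T -> x != y.
Proof. by move=> t /(tree_edge t); rewrite cards2; case: (x != y). Qed.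

Lemma sides T x y : tree T -> [set x; y] \in T -> forall v,
  cn (T :\ [set x; y]) x v || cn (T :\ [set x; y]) y v.
Proof.
move=> t xyT v.
apply: (connect_ind (Q := fun v => cn (T :\ [set x; y]) x v || cn (T :\ [set x; y]) y v)) (tree_conn x v t).
  by rewrite cn_refl.
move=> u w Qu; rewrite /adj => uwT.
case E: ([set u; w] == [set x; y]).
  by move/eqP/set2_eq: E => [[? ?]|[? ?]]; subst; rewrite cn_refl ?orbT.
have : cn (T :\ [set x; y]) u w by apply: connect1; rewrite /adj in_setD1 E uwT.
by move: Qu; rewrite !cnE; eqcase.
Qed.

Lemma exchange T x y p q : tree T -> [set x; y] \in T ->
  cn (T :\ [set x; y]) x p -> cn (T :\ [set x; y]) y q ->
  tree ([set p; q] |: (T :\ [set x; y])).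
Proof.
move=> t fT xp yq.
have nxy := edge_neq t fT.
have br := tree_bridge t fT nxy.
have sd := sides t fT.
set f := [set x; y] in fT xp yq br sd *.
set G0 := T :\ f in xp yq br sd *.
have npq : p != q.
  apply/eqP => E; subst q; move: br xp yq; rewrite !cnE; eqcase.
have sub0 : G0 \subset [set p; q] |: G0.
  by apply/subsetP => z zi; rewrite in_setU1 zi orbT.
apply: mk_tree.
- move=> g; rewrite in_setU1 => /orP[/eqP -> | /setD1P[_ gT]].
    by rewrite cards2 npq.
  exact: tree_edge t gT.
- have pq' : cn ([set p; q] |: G0) p q by apply: cn_edge; rewrite setU11.
  have xy' : cn ([set p; q] |: G0) x y.
    apply: cn_trans (cn_mono sub0 xp) (cn_trans pq' _).
    by apply: cn_mono sub0 _; rewrite cn_sym.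
  have hx : forall u, cn ([set p; q] |: G0) x u.
    move=> u; case/orP: (sd u) => h; first exact: cn_mono sub0 h.
    exact: cn_trans xy' (cn_mono sub0 h).
  by move=> u v; apply: cn_trans (hx v); rewrite cn_sym.
- move=> s r hT nsr.
  case E: ([set s; r] == [set p; q]).
    have sub : ([set p; q] |: G0) :\ [set s; r] \subset G0.
      apply/subsetP => z; rewrite in_setD1 in_setU1 (eqP E).
      by case/andP => /negbTE ->.
    apply/negP => c; have c0 := cn_mono sub c.
    move/eqP/set2_eq: E => [[? ?]|[? ?]]; subst;
      by move: br xp yq c0; rewrite !cnE; eqcase.
  have hG0 : [set s; r] \in G0 by move: hT; rewrite in_setU1 E.
  have hT' : [set s; r] \in T by move: hG0; rewrite in_setD1 => /andP[].
  have hf : [set s; r] != f by move: hG0; rewrite in_setD1 => /andP[].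
  have brh := tree_bridge t hT' nsr.
  set h := [set s; r] in E hT hG0 hT' hf brh *.
  set G := G0 :\ h.
  have E1 : ([set p; q] |: G0) :\ h = [set p; q] |: G.
    apply/setP => z; rewrite /G !in_setD1 !in_setU1 !in_setD1.
    by have [->|zh] := eqVneq z h; rewrite ?E ?andbF //=.
  have E2 : T :\ h = f |: G.
    apply/setP => z; rewrite /G /G0 !in_setU1 !in_setD1.
    have [->|zf] := eqVneq z f; last by rewrite /=; case: (z != h).
    by rewrite eq_sym hf fT.
  have E3 : G0 = h |: G by rewrite /G setD1K.
  move: brh br xp yq; rewrite E1 E2 E3 /h /f !cadd !cnE; bsolve.
Qed.


Lemma exists_u T a b : tree T -> a != b ->
  exists u, [set b; u] \in T /\ cn (T :\ [set b; u]) u a.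
Proof.
move=> t nab.
have : a = b \/ exists u, [set b; u] \in T /\ cn (T :\ [set b; u]) u a.
  apply: (connect_ind (Q := fun v => v = b \/ exists u, [set b; u] \in T /\ cn (T :\ [set b; u]) u v)) (tree_conn b a t); first by left.
  move=> v w Qv vw.
  have [->|wb] := eqVneq w b; first by left.
  right; have [vb|vnb] := eqVneq v b.
    by subst v; exists w; split => //; apply: cn_refl.
  case: Qv => [vb'|[u [buT c]]]; first by rewrite vb' eqxx in vnb.
  exists u; split => //; apply: cn_trans c (cn_edge _).
  rewrite in_setD1 (vw : [set v; w] \in T) andbT; apply/eqP => /set2_eq [[? ?]|[? ?]]; subst.
    by rewrite eqxx in vnb.
  by rewrite eqxx in wb.
by case => [ab|//]; rewrite ab eqxx in nab.
Qed.

Lemma uniq_u T a b u1 u2 : tree T -> [set b; u1] \in T -> [set b; u2] \in T ->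
  cn (T :\ [set b; u1]) u1 a -> cn (T :\ [set b; u2]) u2 a -> u1 = u2.
Proof.
move=> t e1 e2 c1 c2; have [//|n12] := eqVneq u1 u2.
have nb1 := edge_neq t e1; have nb2 := edge_neq t e2.
have br1 := tree_bridge t e1 nb1; have br2 := tree_bridge t e2 nb2.
have ne : [set b; u1] != [set b; u2].
  by apply/eqP => /(set2_inj nb1) E; rewrite E eqxx in n12.
set G := T :\ [set b; u1] :\ [set b; u2].
have E1 : T :\ [set b; u1] = [set b; u2] |: G.
  by rewrite /G setD1K // in_setD1 eq_sym ne e2.
have E2 : T :\ [set b; u2] = [set b; u1] |: G.
  apply/setP => z; rewrite /G !in_setU1 !in_setD1.
  have [->|zb] := eqVneq z [set b; u1]; first by rewrite ne e1.
  by case: (z != [set b; u2]).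
move: br1 br2 c1 c2; rewrite E1 E2 !cadd !cnE; bsolve.
Qed.

Definition Pab a b T u : bool := [&& tree T, [set a; b] \in T & cn (T :\ [set a; b]) a u].
Definition phi a b T u : Gr := [set b; u] |: (T :\ [set a; b]).

Lemma phiP a b T u : Pab a b T u ->
  [/\ tree (phi a b T u), [set b; u] \in phi a b T u,
      cn (phi a b T u :\ [set b; u]) u a &
      [set a; b] |: (phi a b T u :\ [set b; u]) = T].
Proof.
case/and3P => t abT au.
have nab := edge_neq t abT; have br := tree_bridge t abT nab.
have nin : [set b; u] \notin T :\ [set a; b].
  by apply/negP => h; move: (cn_edge h) br au; rewrite !cnE; bsolve.
have E : phi a b T u :\ [set b; u] = T :\ [set a; b] by rewrite /phi setU1K.
split.
- rewrite /phi (setUC [set b] [set u]).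
  exact: exchange t abT au (cn_refl _ _).
- by rewrite /phi setU11.
- by rewrite E cn_sym.
- by rewrite E setD1K.
Qed.

Lemma psiP a b T u : a != b -> tree T -> [set b; u] \in T ->
  cn (T :\ [set b; u]) u a ->
  Pab a b ([set a; b] |: (T :\ [set b; u])) u /\
  phi a b ([set a; b] |: (T :\ [set b; u])) u = T.
Proof.
move=> nab t buT ua.
have nbu := edge_neq t buT; have br := tree_bridge t buT nbu.
have nin : [set a; b] \notin T :\ [set b; u].
  by apply/negP => h; move: (cn_edge h) br ua; rewrite !cnE; bsolve.
have E : ([set a; b] |: (T :\ [set b; u])) :\ [set a; b] = T :\ [set b; u].
  by rewrite setU1K.
have S : [set u; b] = [set b; u] by rewrite (setUC [set u] [set b]).
split.
- apply/and3P; split.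
  + have := exchange (x := u) (y := b) (p := a) (q := b) t.
    by rewrite S; apply => //; apply: cn_refl.
  + by rewrite setU11.
  + by rewrite E cn_sym.
- by rewrite /phi E setD1K.
Qed.

Lemma bij_sum a b (w : Gr -> nat) : a != b ->
  \sum_(T : Gr) \sum_(u : 'I_n) Pab a b T u * w (phi a b T u) =
  \sum_(T : Gr) tree T * w T.
Proof.
move=> nab.
rewrite pair_bigA /=.
rewrite (bigID (fun p : Gr * 'I_n => Pab a b p.1 p.2)) /=.
rewrite [X in _ + X]big1 ?addn0; last by move=> p /negbTE ->.
rewrite (eq_bigr (fun p : Gr * 'I_n => w (phi a b p.1 p.2))); last by move=> p ->; rewrite mul1n.
set S := [set p : Gr * 'I_n | Pab a b p.1 p.2].
have -> : \sum_(p | Pab a b p.1 p.2) w (phi a b p.1 p.2) =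
          \sum_(p in S) w ((fun p : Gr * 'I_n => phi a b p.1 p.2) p).
  by apply: eq_bigl => p; rewrite inE.
rewrite -big_imset /=.
- have -> : [set phi a b p.1 p.2 | p in S] = [set T | tree T].
    apply/setP => T'; rewrite inE; apply/imsetP/idP.
    + by case => [[T u]]; rewrite inE /= => P ->; case: (phiP P).
    + move=> t; case: (exists_u t nab) => u [buT ua].
      case: (psiP nab t buT ua) => P E.
      by exists ([set a; b] |: (T' :\ [set b; u]), u); rewrite ?inE.
  rewrite big_mkcond; apply: eq_bigr => T _; rewrite inE.
  by case: (tree T); rewrite ?mul1n ?mul0n.
- move=> [T1 u1] [T2 u2]; rewrite !inE /= => P1 P2 /= E.
  case: (phiP P1) => t1 b1 c1 E1; case: (phiP P2) => t2 b2 c2 E2.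
  rewrite E in b1 c1 E1.
  have u12 := uniq_u t2 b1 b2 c1 c2; subst u2.
  by rewrite -E1 E2.
Qed.

End Graph.

Section Count.
Variable n : nat.
Notation Gr := {set {set 'I_n}}.
Implicit Types (T G F : Gr) (x y p q u v w s r a b c d z : 'I_n) (g : {set 'I_n}).

Definition Ntr := \sum_(T : Gr) tree T.
Definition ne a b := \sum_(T : Gr) tree T * ([set a; b] \in T).
Definition ne2 (e e' : {set 'I_n}) := \sum_(T : Gr) tree T * (e \in T) * (e' \in T).
Definition Z x y z := \sum_(T : Gr) tree T * (([set x; y] \in T) && cn (T :\ [set x; y]) y z).

Lemma set2C x y : [set x; y] = [set y; x].
Proof. by rewrite (setUC [set x] [set y]). Qed.

Lemma notin_set2 g x u : x \notin g -> g != [set x; u].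
Proof. by move=> H; apply/eqP => E; rewrite E set21 in H. Qed.

Lemma phi_mem a b T u g : g != [set a; b] -> g != [set b; u] ->
  (g \in phi a b T u) = (g \in T).
Proof. by move=> h1 h2; rewrite /phi in_setU1 in_setD1 (negbTE h1) (negbTE h2). Qed.

Definition SP a b (h : Gr -> nat) := \sum_(T : Gr) \sum_(u : 'I_n) Pab a b T u * h T.

Lemma split_count a b (h : Gr -> nat) : a != b ->
  SP a b h + SP b a h = n * \sum_(T : Gr) tree T * ([set a; b] \in T) * h T.
Proof.
move=> nab; rewrite /SP -big_split big_distrr; apply: eq_bigr => T _ /=.
rewrite -big_split /=.
under eq_bigr do rewrite -mulnDl.
rewrite -big_distrl /=.
rewrite /Pab (set2C b a).
case t: (tree T); case abT: ([set a; b] \in T); rewrite /= ?mul0n ?muln0; last first.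
- by rewrite big1.
- by rewrite big1.
- by rewrite big1.
have -> : \sum_(u < n) (cn (T :\ [set a; b]) a u + cn (T :\ [set a; b]) b u) = \sum_(u < n) 1.
  apply: eq_bigr => u _.
  have := sides t abT u; have := tree_bridge t abT nab.
  case h1: (cn _ a u); case h2: (cn _ b u) => //= /negP[].
  by apply: cn_trans h1 _; rewrite cn_sym.
by rewrite sum1_card card_ord ?mul1n ?muln1 mulnC.
Qed.

Lemma SP_one a b : a != b -> SP a b (fun _ => 1) = Ntr.
Proof.
move=> nab; have := bij_sum (fun _ => 1) nab; rewrite /SP => ->.
by apply: eq_bigr => T _; rewrite muln1.
Qed.

Lemma nesym a b : a != b -> b != a.
Proof. by rewrite eq_sym. Qed.

Lemma ne_count a b : a != b -> n * ne a b = 2 * Ntr.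
Proof.
move=> nab; have := split_count (fun _ => 1) nab.
rewrite (SP_one nab) (SP_one (nesym nab)) => E.
have E' : \sum_(T : Gr) tree T * ([set a; b] \in T) * 1 = ne a b.
  by apply: eq_bigr => T _; rewrite muln1.
rewrite E' in E; lia.
Qed.


Lemma SP_transfer a b h (w : Gr -> nat) : a != b ->
  (forall T u, Pab a b T u -> h T = w (phi a b T u)) ->
  SP a b h = \sum_(T : Gr) tree T * w T.
Proof.
move=> nab H; rewrite -(bij_sum w nab) /SP; apply: eq_bigr => T _; apply: eq_bigr => u _.
by case P: (Pab a b T u); rewrite ?mul0n // (H _ _ P).
Qed.

Lemma notin2 a b c d : c \notin [set a; b] -> d \notin [set a; b] -> a \notin [set c; d].
Proof. by move=> hc hd; apply/set2P => -[] E; subst; rewrite ?set21 in hc hd. Qed.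

Lemma ne2_disj a b c d : a != b -> c \notin [set a; b] -> d \notin [set a; b] ->
  n * ne2 [set a; b] [set c; d] = 2 * ne c d.
Proof.
move=> nab hc hd.
have ha := notin2 hc hd.
have hb : b \notin [set c; d] by apply: (@notin2 b a); rewrite set2C.
have := split_count (fun T => [set c; d] \in T) nab.
rewrite (SP_transfer (w := fun T => [set c; d] \in T) nab); last first.
  by move=> T u P; rewrite phi_mem // notin_set2.
rewrite (SP_transfer (w := fun T => [set c; d] \in T) (nesym nab)); last first.
  by move=> T u P; rewrite phi_mem // notin_set2.
rewrite /ne2 /ne => <-; lia.
Qed.

Lemma sum_ind (F : 'I_n -> nat) c : \sum_(u < n) F u * (u == c) = F c.
Proof.
rewrite (bigD1 c) //= eqxx muln1 big1 ?addn0 // => u /negbTE ->.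
by rewrite muln0.
Qed.

Lemma Zswap a b c : a != b -> b != c -> a != c -> Z b a c = Z b c a.
Proof.
move=> nab nbc nac.
have E1 : \sum_(T : Gr) \sum_(u < n) Pab a b T u * (u == c) = Z b a c.
  rewrite /Z; apply: eq_bigr => T _; rewrite sum_ind /Pab (set2C b a) mulnb.
  by rewrite andbA.
rewrite -E1 /Z -(bij_sum (fun T => ([set b; c] \in T) && cn (T :\ [set b; c]) c a) nab).
apply: eq_bigr => T _; apply: eq_bigr => u _.
case P: (Pab a b T u); rewrite ?mul0n // !mul1n; congr (nat_of_bool _).
case: (phiP P) => t bu ua _.
apply/eqP/idP => [E|/andP[bc ca]]; first by subst; rewrite bu ua.
by rewrite (uniq_u t bu bc ua ca).
Qed.

Lemma Zsum x y z : x != y -> Z x y z + Z y x z = ne x y.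
Proof.
move=> nxy; rewrite /Z /ne -big_split; apply: eq_bigr => T _ /=.
rewrite (set2C y x).
case t: (tree T); case xy: ([set x; y] \in T); rewrite /= ?mul0n //.
have := sides t xy z; have := tree_bridge t xy nxy.
case h1: (cn _ x z); case h2: (cn _ y z) => //= /negP[].
by apply: cn_trans h1 _; rewrite cn_sym.
Qed.

Lemma ne2_adj a b c : a != b -> b != c -> a != c ->
  n * ne2 [set a; b] [set b; c] + Z b a c = 2 * ne b c.
Proof.
move=> nab nbc nac.
have := split_count (fun T => [set b; c] \in T) nab.
rewrite (SP_transfer (w := fun T => [set b; c] \in T) (nesym nab)); last first.
  move=> T u P; rewrite phi_mem //; last by apply: notin_set2; apply/set2P => -[] E; subst; rewrite eqxx in nab nac.
  by apply/eqP => /(set2_inj nbc) E; subst; rewrite eqxx in nac.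
have E1 : \sum_(T : Gr) \sum_(u < n) Pab a b T u * (u == c) = Z b a c.
  rewrite /Z; apply: eq_bigr => T _; rewrite sum_ind /Pab (set2C b a) mulnb.
  by rewrite andbA.
have E2 : SP a b (fun T => [set b; c] \in T) + Z b a c = ne b c.
  rewrite -E1 /SP -big_split /ne -(bij_sum (fun T => [set b; c] \in T) nab).
  apply: eq_bigr => T _; rewrite -big_split; apply: eq_bigr => u _ /=.
  case P: (Pab a b T u); rewrite ?mul0n // !mul1n.
  case/and3P: (P) => t abT au.
  rewrite /phi in_setU1 in_setD1.
  have -> : ([set b; c] == [set b; u]) = (u == c).
    by apply/eqP/eqP => [/(set2_inj nbc) ->|->].
  have nbcab : [set b; c] != [set a; b].
    by rewrite (set2C a b); apply/eqP => /(set2_inj nbc) E; rewrite E eqxx in nac.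
  rewrite nbcab /=.
  case uc: (u == c); last by rewrite addn0.
  move/eqP: uc => uc; subst u.
  have -> : ([set b; c] \in T) = false.
    apply/negP => bcT.
    have bc' : cn (T :\ [set a; b]) b c by apply: cn_edge; rewrite in_setD1 nbcab bcT.
    have := tree_bridge t abT nab; move: au bc'; rewrite !cnE; bsolve.
  by [].
move=> E3.
have E4 : n * ne2 [set a; b] [set b; c] = SP a b (fun T => [set b; c] \in T) + ne b c by rewrite E3.
lia.
Qed.

Lemma count_disj a b c d : a != b -> c != d -> c \notin [set a; b] -> d \notin [set a; b] ->
  n * n * ne2 [set a; b] [set c; d] = 4 * Ntr.
Proof.
move=> nab ncd hc hd; have := ne2_disj nab hc hd.
have := ne_count ncd; nia.
Qed.

Lemma count_adj a b c : a != b -> b != c -> a != c ->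
  n * n * ne2 [set a; b] [set b; c] = 3 * Ntr.
Proof.
move=> nab nbc nac.
have h0 := ne2_adj nab nbc nac.
have s1 := Zswap nab nbc nac.
have s2 := Zswap (nesym nab) nac nbc.
have s3 := Zswap nac (nesym nbc) nab.
have z1 := Zsum c nab.
have z2 := Zsum b nac.
have z3 := Zsum a nbc.
have e1 := ne_count nab.
have e2 := ne_count nac.
have e3 := ne_count nbc.
nia.
Qed.


Lemma star_tree z0 : tree [set [set z0; v] | v in [set v | v != z0]].
Proof.
set S := [set [set z0; v] | v in [set v | v != z0]].
have hS : forall v, v != z0 -> [set z0; v] \in S.
  by move=> v vz; apply: imset_f; rewrite inE.
apply: mk_tree.
- by move=> f /imsetP[v]; rewrite inE => vz ->; rewrite cards2 eq_sym vz.
- have h : forall v, cn S z0 v.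
    move=> v; have [->|vz] := eqVneq v z0; first exact: cn_refl.
    exact/cn_edge/hS.
  by move=> x y; apply: cn_trans (h y); rewrite cn_sym.
- move=> x y /imsetP[v]; rewrite inE => vz E nxy.
  rewrite E.
  have iso : forall w, cn (S :\ [set z0; v]) v w -> w = v.
    move=> w; apply: (connect_ind (Q := fun w => w = v)) => // v' w' -> {v'}.
    rewrite /adj in_setD1 => /andP[ne /imsetP[v'']]; rewrite inE => v''z E'.
    move/set2_eq: E' => [[? ?]|[? ?]]; subst.
      by rewrite eqxx in vz.
    by rewrite set2C eqxx in ne.
  apply/negP => c; move/esym/set2_eq: E => [[? ?]|[? ?]]; subst.
    by rewrite cn_sym in c; move/iso: c => E; rewrite E eqxx in vz.
  by move/iso: c => E; rewrite E eqxx in vz.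
Qed.

Lemma Ntr_pos (z0 : 'I_n) : 0 < Ntr.
Proof. by rewrite /Ntr (bigD1 [set [set z0; v] | v in [set v | v != z0]]) //= star_tree. Qed.

End Count.

Local Open Scope ring_scope.

Section Prob.
Variables (R : realFieldType) (n : nat).
Notation Gr := {set {set 'I_n}}.

Definition Tr : {set Gr} := [set t : Gr | tree t].
Definition Nr : R := (Ntr n)%:R.

Lemma card_Tr : #|Tr| = Ntr n.
Proof.
rewrite /Ntr -sum1_card big_mkcond /=; apply: eq_bigr => T _.
by rewrite inE; case: (tree T).
Qed.

Lemma sum_prod k (g : 'I_k -> Gr -> R) :
  \sum_(T in tree_tuples n k) \prod_i g i (T i) = \prod_i \sum_(t in Tr) g i t.
Proof.
rewrite bigA_distr_big; apply: eq_bigl => T.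
rewrite inE; apply/forallP/ffun_onP => H i; move: (H i); by rewrite inE.
Qed.

Lemma card_tt k : (#|tree_tuples n k|)%:R = Nr ^+ k :> R.
Proof.
have E : \sum_(T in tree_tuples n k) (1 : R) = \prod_(i < k) \sum_(t in Tr) (1 : R).
  rewrite -(sum_prod (fun _ _ => 1)); apply: eq_bigr => T _.
  by rewrite prodr_const expr1n.
rewrite sumr_const in E.
by rewrite E prodr_const card_ord sumr_const card_Tr.
Qed.

Definition E1 (g : Gr -> R) := (\sum_(t in Tr) g t) / Nr.

Lemma Ex_def k f : Expect f = (\sum_(T in tree_tuples n k) f T) / Nr ^+ k.
Proof. by rewrite /Expect card_tt. Qed.

Lemma Eprod k (g : 'I_k -> Gr -> R) :
  Expect (fun T : {ffun 'I_k -> Gr} => \prod_i g i (T i)) = \prod_i E1 (g i).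
Proof. by rewrite Ex_def sum_prod /E1 prodf_div prodr_const card_ord. Qed.

Lemma ExD k (f g : {ffun 'I_k -> Gr} -> R) :
  Expect (fun T => f T + g T) = Expect f + Expect g.
Proof. by rewrite /Expect big_split mulrDl. Qed.

Lemma ExB k (f g : {ffun 'I_k -> Gr} -> R) :
  Expect (fun T => f T - g T) = Expect f - Expect g.
Proof. by rewrite /Expect sumrB mulrBl. Qed.

Lemma ExZ k c (f : {ffun 'I_k -> Gr} -> R) :
  Expect (fun T => c * f T) = c * Expect f.
Proof. by rewrite /Expect -mulr_sumr mulrA. Qed.

Lemma ExS k (f : 'I_k -> {ffun 'I_k -> Gr} -> R) :
  Expect (fun T => \sum_i f i T) = \sum_i Expect (f i).
Proof. by rewrite /Expect exchange_big mulr_suml. Qed.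

Lemma Ext k (f g : {ffun 'I_k -> Gr} -> R) : f =1 g -> Expect f = Expect g.
Proof. by move=> fg; rewrite /Expect (eq_bigr _ (fun T _ => fg T)). Qed.

Hypothesis Npos : (0 < Ntr n)%N.

Lemma Nr_neq0 : Nr != 0.
Proof. by rewrite pnatr_eq0 -lt0n. Qed.

Lemma ExC k (c : R) : Expect (fun _ : {ffun 'I_k -> Gr} => c) = c.
Proof.
rewrite /Expect sumr_const -[c *+ _]mulr_natr mulfK //.
by rewrite card_tt expf_neq0 // Nr_neq0.
Qed.

Lemma E1D f g : E1 (fun t => f t + g t) = E1 f + E1 g.
Proof. by rewrite /E1 big_split mulrDl. Qed.
Lemma E1B f g : E1 (fun t => f t - g t) = E1 f - E1 g.
Proof. by rewrite /E1 sumrB mulrBl. Qed.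
Lemma E1C c : E1 (fun _ => c) = c.
Proof. by rewrite /E1 sumr_const card_Tr -[c *+ _]mulr_natr mulfK // Nr_neq0. Qed.
Lemma E1ext f g : f =1 g -> E1 f = E1 g.
Proof. by move=> fg; rewrite /E1 (eq_bigr _ (fun T _ => fg T)). Qed.


Definition xe (e : {set 'I_n}) (t : Gr) : R := ((e \in t) : nat)%:R.

Lemma prod_pick k (G : 'I_k -> R) i j : i != j ->
  (forall l, l != i -> l != j -> G l = 1) -> \prod_l G l = G i * G j.
Proof.
move=> nij H; rewrite (bigD1 i) //= (bigD1 j) 1?eq_sym //= big1 ?mulr1 //.
by move=> l /andP[li lj]; apply: H.
Qed.

Lemma Ecoord k (h0 h1 : Gr -> R) (i : 'I_k) (F : {ffun 'I_k -> Gr} -> R) :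
  (forall T, F T = h1 (T i) * \prod_(l | l != i) h0 (T l)) ->
  Expect F = E1 h1 * E1 h0 ^+ k.-1.
Proof.
move=> HF.
pose g l := if l == i then h1 else h0.
rewrite (@Ext k _ (fun T => \prod_l g l (T l))); last first.
  move=> T; rewrite HF [RHS](bigD1 i) //= /g eqxx; congr (_ * _).
  by apply: eq_bigr => l /negbTE ->.
rewrite Eprod (bigD1 i) //= /g eqxx; congr (_ * _).
rewrite (eq_bigr (fun _ => E1 h0)); last by move=> l /negbTE ->.
by rewrite (prodr_const (predC1 i)) cardC1 card_ord.
Qed.

Lemma Eall k h (F : {ffun 'I_k -> Gr} -> R) :
  (forall T, F T = \prod_l h (T l)) -> Expect F = E1 h ^+ k.
Proof.
move=> HF; pose g (l : 'I_k) := h.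
rewrite (@Ext k _ (fun T => \prod_l g l (T l))) //.
by rewrite Eprod (eq_bigr (fun _ => E1 h)) // prodr_const card_ord.
Qed.

Lemma E_one k h (i : 'I_k) (F : {ffun 'I_k -> Gr} -> R) :
  (forall T, F T = h (T i)) -> Expect F = E1 h.
Proof.
move=> HF; rewrite (@Ecoord k (fun _ => 1) h i); first by rewrite E1C expr1n mulr1.
by move=> T; rewrite HF big1 ?mulr1.
Qed.

Lemma E_pair k h1 h2 (i j : 'I_k) (F : {ffun 'I_k -> Gr} -> R) : i != j ->
  (forall T, F T = h1 (T i) * h2 (T j)) -> Expect F = E1 h1 * E1 h2.
Proof.
move=> nij HF.
pose g l := if l == i then h1 else if l == j then h2 else (fun _ : Gr => (1 : R)).
have gi : g i = h1 by rewrite /g eqxx.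
have gj : g j = h2 by rewrite /g eq_sym (negbTE nij) eqxx.
rewrite (@Ext k _ (fun T => \prod_l g l (T l))); last first.
  move=> T; rewrite HF (@prod_pick k (fun l => g l (T l)) i j) // ?gi ?gj //.
  by move=> l li lj; rewrite /g (negbTE li) (negbTE lj).
rewrite Eprod (@prod_pick k (fun l => E1 (g l)) i j) // ?gi ?gj //.
by move=> l li lj; rewrite /g (negbTE li) (negbTE lj) E1C.
Qed.

Lemma Rr_repr k e (T : {ffun 'I_k -> Gr}) : (0 < k)%N ->
  Rr R e T = \sum_i xe e (T i) - 1 + \prod_i (1 - xe e (T i)).
Proof.
move=> k0; rewrite /Rr /Rsurplus.
have le : (\max_(i < k) Xind e T i <= \sum_(i < k) Xind e T i)%N.
  by apply/bigmax_leqP => i _; rewrite (bigD1 i) //= leq_addr.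
rewrite natrB // natr_sum.
case: (boolP [exists i, e \in T i]) => [/existsP[i ei]| /existsPn ne].
- have -> : (\max_(i < k) Xind e T i)%N = 1%N.
    apply/eqP; rewrite eqn_leq; apply/andP; split.
      by apply/bigmax_leqP => j _; rewrite /Xind leq_b1.
    by have := @leq_bigmax _ (fun j => Xind e T j) i; rewrite /Xind ei.
  by rewrite [\prod_i _](bigD1 i) //= {2}/xe ei subrr mul0r addr0.
- have -> : (\max_(i < k) Xind e T i)%N = 0%N.
    by apply/eqP; rewrite -leqn0; apply/bigmax_leqP => j _; rewrite /Xind (negbTE (ne j)).
  rewrite [\prod_i _]big1 ?subr0 ?subrK //.
  by move=> j _; rewrite /xe (negbTE (ne j)) subr0.
Qed.


Lemma cov_formula k e e' (p q : R) : (0 < k)%N ->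
  E1 (xe e) = p -> E1 (xe e') = p -> E1 (fun t => xe e t * xe e' t) = q ->
  Cov (@Rr R n k e) (@Rr R n k e') =
  k%:R * (q - p ^+ 2) + 2 * k%:R * (1 - p) ^+ k.-1 * (p ^+ 2 - q)
  + (1 - 2 * p + q) ^+ k - (1 - p) ^+ (2 * k).
Proof.
move=> k0 hx hy hxy.
pose S (T : {ffun 'I_k -> Gr}) := \sum_(i < k) xe e (T i).
pose S' (T : {ffun 'I_k -> Gr}) := \sum_(i < k) xe e' (T i).
pose Q (T : {ffun 'I_k -> Gr}) := \prod_(i < k) (1 - xe e (T i)).
pose Q' (T : {ffun 'I_k -> Gr}) := \prod_(i < k) (1 - xe e' (T i)).
have ES : Expect (fun T => S T) = p *+ k.
  rewrite /S ExS (eq_bigr (fun _ => p)) ?sumr_const ?card_ord // => i _.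
  by rewrite -hx; apply: (@E_one k (xe e) i).
have ES' : Expect (fun T => S' T) = p *+ k.
  rewrite /S' ExS (eq_bigr (fun _ => p)) ?sumr_const ?card_ord // => i _.
  by rewrite -hy; apply: (@E_one k (xe e') i).
have EQ : Expect (fun T => Q T) = (1 - p) ^+ k.
  by rewrite (@Eall k (fun t => 1 - xe e t)) // E1B E1C hx.
have EQ' : Expect (fun T => Q' T) = (1 - p) ^+ k.
  by rewrite (@Eall k (fun t => 1 - xe e' t)) // E1B E1C hy.
have ESS : Expect (fun T => S T * S' T) = (q + (p * p) *+ k.-1) *+ k.
  rewrite (@Ext k _ (fun T => \sum_i \sum_j xe e (T i) * xe e' (T j))); last first.
    by move=> T; rewrite /S /S' mulr_suml; apply: eq_bigr => i _; rewrite mulr_sumr.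
  rewrite ExS (eq_bigr (fun _ => q + (p * p) *+ k.-1)) ?sumr_const ?card_ord // => i _.
  rewrite ExS (bigD1 i) //=.
  rewrite (@E_one k (fun t => xe e t * xe e' t) i); last by move=> T.
  rewrite hxy (eq_bigr (fun _ => p * p)); last first.
    move=> j ji; rewrite (@E_pair k (xe e) (xe e') i j) ?hx ?hy //; first by rewrite eq_sym.
  by rewrite (sumr_const (predC1 i)) cardC1 card_ord.
have ESQ : Expect (fun T => S T * Q' T) = ((p - q) * (1 - p) ^+ k.-1) *+ k.
  rewrite (@Ext k _ (fun T => \sum_i (xe e (T i) * (1 - xe e' (T i))) * \prod_(l | l != i) (1 - xe e' (T l)))); last first.
    by move=> T; rewrite /S /Q' mulr_suml; apply: eq_bigr => i _; rewrite (bigD1 i) //= mulrA.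
  rewrite ExS (eq_bigr (fun _ => (p - q) * (1 - p) ^+ k.-1)) ?sumr_const ?card_ord // => i _.
  rewrite (@Ecoord k (fun t => 1 - xe e' t) (fun t => xe e t * (1 - xe e' t)) i); last by move=> T.
  rewrite E1B E1C hy (@E1ext (fun t => xe e t * (1 - xe e' t)) (fun t => xe e t - xe e t * xe e' t)).
    by rewrite E1B hx hxy.
  by move=> t; rewrite mulrBr mulr1.
have EQS : Expect (fun T => Q T * S' T) = ((p - q) * (1 - p) ^+ k.-1) *+ k.
  rewrite (@Ext k _ (fun T => \sum_i (xe e' (T i) * (1 - xe e (T i))) * \prod_(l | l != i) (1 - xe e (T l)))); last first.
    move=> T; rewrite /S' /Q mulr_sumr; apply: eq_bigr => i _; rewrite (bigD1 i) //=.
    by rewrite mulrC mulrA [_ * (1 - _)]mulrC.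
  rewrite ExS (eq_bigr (fun _ => (p - q) * (1 - p) ^+ k.-1)) ?sumr_const ?card_ord // => i _.
  rewrite (@Ecoord k (fun t => 1 - xe e t) (fun t => xe e' t * (1 - xe e t)) i); last by move=> T.
  rewrite E1B E1C hx (@E1ext (fun t => xe e' t * (1 - xe e t)) (fun t => xe e' t - xe e t * xe e' t)).
    by rewrite E1B hy hxy.
  by move=> t; rewrite mulrBr mulr1 mulrC.
have EQQ : Expect (fun T => Q T * Q' T) = (1 - 2 * p + q) ^+ k.
  rewrite (@Eall k (fun t => (1 - xe e t) * (1 - xe e' t))); last first.
    by move=> T; rewrite /Q /Q' -big_split.
  rewrite (@E1ext _ (fun t => 1 - xe e t - xe e' t + xe e t * xe e' t)); last first.
    by move=> t /=; ring.
  rewrite E1D !E1B E1C hx hy hxy; congr (_ ^+ _); ring.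
have ER : forall e0, Expect (@Rr R n k e0) =
    Expect (fun T => \sum_(i < k) xe e0 (T i)) - 1 + Expect (fun T => \prod_(i < k) (1 - xe e0 (T i))).
  move=> e0; rewrite (@Ext k _ (fun T => \sum_(i < k) xe e0 (T i) - 1 + \prod_(i < k) (1 - xe e0 (T i)))).
    by rewrite ExD ExB ExC.
  by move=> T; apply: Rr_repr.
rewrite /Cov !ER.
rewrite (@Ext k _ (fun T => S T * S' T + S T * Q' T + Q T * S' T + Q T * Q' T
     - S T - S' T - Q T - Q' T + 1)); last first.
  by move=> T; rewrite !Rr_repr // /S /S' /Q /Q'; ring.
rewrite ExD !ExB !ExD ExC.
rewrite ESS ESQ EQS EQQ.
rewrite (ES : Expect S = _) (ES' : Expect S' = _) (EQ : Expect Q = _) (EQ' : Expect Q' = _).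
have [m km] : exists m, k = m.+1 by exists k.-1; rewrite prednK.
rewrite km /= exprS mul2n -addnn exprD exprS.
ring.
Qed.

End Prob.

Lemma E1_count (R : realFieldType) n (f : {set {set 'I_n}} -> nat) :
  @E1 R n (fun t => (f t)%:R) = (\sum_(T : {set {set 'I_n}}) tree T * f T)%:R / Nr R n.
Proof.
rewrite /E1 natr_sum big_mkcond /=; congr (_ / _); apply: eq_bigr => T _.
by rewrite inE; case: (tree T); rewrite ?mul1n ?mul0n.
Qed.

Lemma p_val (R : realFieldType) n (a b : 'I_n) : (0 < n)%N -> (0 < Ntr n)%N -> a != b ->
  E1 (xe R [set a; b]) = 2 / n%:R.
Proof.
move=> n0 N0 nab.
have E := congr1 (fun m => m%:R : R) (ne_count nab); rewrite /= !natrM in E.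
rewrite (@E1_count R n (fun t => [set a; b] \in t)) -/(ne _ _).
have nz : n%:R != 0 :> R by rewrite pnatr_eq0 -lt0n.
have Nz := Nr_neq0 R N0.
apply/eqP; rewrite eqr_div //; apply/eqP; rewrite mulrC E /Nr; ring.
Qed.

Lemma q_val (R : realFieldType) n (e e' : {set 'I_n}) (c : nat) : (0 < n)%N -> (0 < Ntr n)%N ->
  (n * n * ne2 e e' = c * Ntr n)%N ->
  E1 (fun t => xe R e t * xe R e' t) = c%:R / n%:R ^+ 2.
Proof.
move=> n0 N0 H.
have E := congr1 (fun m => m%:R : R) H; rewrite /= !natrM in E.
rewrite (@E1ext _ _ _ (fun t => ((e \in t) * (e' \in t))%N%:R)); last by move=> t; rewrite natrM.
rewrite (@E1_count R n (fun t => ((e \in t) * (e' \in t))%N)).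
have -> : (\sum_(T : {set {set 'I_n}}) tree T * ((e \in T) * (e' \in T)))%N = ne2 e e'.
  by apply: eq_bigr => T _; rewrite mulnA.
have nz : n%:R != 0 :> R by rewrite pnatr_eq0 -lt0n.
have Nz := Nr_neq0 R N0.
apply/eqP; rewrite eqr_div ?expf_neq0 //; apply/eqP; rewrite mulrC expr2 E /Nr; ring.
Qed.

Lemma card2_split n (e : {set 'I_n}) v : #|e| = 2%N -> v \in e -> exists a, a != v /\ e = [set a; v].
Proof.
move=> ce ve; have /cards2P [x [y [nxy E]]] : #|e| == 2%N by rewrite ce.
subst e; case/set2P: ve => ->.
  by exists y; split; [rewrite eq_sym | rewrite set2C].
by exists x.
Qed.

Theorem mainTheorem10 (R : realFieldType) (n k : nat) (e e' : {set 'I_n}) :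
  (3 <= n)%N -> (1 <= k)%N ->
  #|e| = 2%N -> #|e'| = 2%N -> e != e' ->
  ([disjoint e & e'] ->
     Cov (@Rr R n k e) (@Rr R n k e') = 0) /\
  (~~ [disjoint e & e'] ->
     Cov (@Rr R n k e) (@Rr R n k e') =
       - (k%:R / n%:R ^+ 2)
       + (2 * k%:R / n%:R ^+ 2) * (1 - 2 / n%:R) ^+ k.-1
       + (1 - 4 / n%:R + 3 / n%:R ^+ 2) ^+ k
       - (1 - 2 / n%:R) ^+ (2 * k)).
Proof.
move=> n3 k1 ce ce' nee.
have n0 : (0 < n)%N by apply: leq_trans n3.
have N0 : (0 < Ntr n)%N := Ntr_pos (Ordinal n0).
have nz : n%:R != 0 :> R by rewrite pnatr_eq0 -lt0n.
split.
- move=> dis.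
  have /cards2P [a [b [nab Ee]]] : #|e| == 2%N by rewrite ce.
  have /cards2P [c [d [ncd Ee']]] : #|e'| == 2%N by rewrite ce'.
  subst e e'.
  have D := disjoint_setI0 dis.
  have hc : c \notin [set a; b].
    apply/negP => h; have : c \in [set a; b] :&: [set c; d] by rewrite inE h set21.
    by rewrite D inE.
  have hd : d \notin [set a; b].
    apply/negP => h; have : d \in [set a; b] :&: [set c; d] by rewrite inE h set22.
    by rewrite D inE.
  have hp := @p_val R n _ _ n0 N0 nab; have hp' := @p_val R n _ _ n0 N0 ncd.
  have hq := @q_val R n _ _ _ n0 N0 (count_disj nab ncd hc hd).
  rewrite (cov_formula N0 k1 hp hp' hq).
  have -> : 4%:R / n%:R ^+ 2 = (2 / n%:R) ^+ 2 :> R by rewrite expr_div_n; congr (_ / _); rewrite expr2 -natrM.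
  have -> : 1 - 2 * (2 / n%:R) + (2 / n%:R) ^+ 2 = (1 - 2 / n%:R) ^+ 2 :> R by ring.
  rewrite exprM; ring.
- rewrite -setI_eq0 => /set0Pn [v]; rewrite inE => /andP[ve ve'].
  case: (card2_split ce ve) => a [nav Ee].
  case: (card2_split ce' ve') => c [ncv Ee'].
  subst e e'.
  have nac : a != c by apply: contraNneq nee => ->.
  rewrite (set2C c v).
  have nvc : v != c by rewrite eq_sym.
  have hp := @p_val R n _ _ n0 N0 nav; have hp' := @p_val R n _ _ n0 N0 nvc.
  have hq := @q_val R n _ _ _ n0 N0 (count_adj nav nvc nac).
  rewrite (cov_formula N0 k1 hp hp' hq).
  have -> : 1 - 2 * (2 / n%:R) + 3%:R / n%:R ^+ 2 = 1 - 4 / n%:R + 3 / n%:R ^+ 2 :> R by ring.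
  field.
  exact: nz.
Qed.
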